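(* Let $\mathbb{Z}_4$ be the semiring of integers modulo $4$. Let $A=\{a_0,a_1,a_2,a_3,b_0,b_1,b_2,b_3,c_0,c_1\}$ (ten distinct elements). Let $\mathbb{X}\colon\mathrm{As}(\{x,y,z\},A)\to\mathbb{Z}_4$ map each of the eight assignments $(x,y,z)\mapsto(a_0,b_0,c_0),(a_0,b_1,c_0),(a_1,b_0,c_1),(a_1,b_1,c_1),(a_2,b_2,c_0),(a_2,b_3,c_0),(a_3,b_2,c_1),(a_3,b_3,c_1)$ to $1$, and every other assignment to $0$. Then $\mathbb{X}$ satisfies the pure independence atoms $x\perp y$ and $xy\perp z$, but does not satisfy $x\perp yz$. Consequently the mixing rule (from $x\perp y$ and $xy\perp z$ infer $x\perp yz$) is not sound for $\mathbb{Z}_4$-teams.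
   Context: For a commutative semiring $K$, a $K$-team is a function $\mathbb{X}\colon\mathrm{As}(V,A)\to K$, where $\mathrm{As}(V,A)$ is the set of assignments $V\to A$. With $V=\{x_1<\dots<x_k\}$ and $\vec a_s=(s(x_1),\dots,s(x_k))$, let $\pi_{\mathbb{X}}$ map the fact $R(\vec a_s)$ ($R$ of arity $k$) to $\mathbb{X}(s)$. For variable tuples $\vec x,\vec y$ from $V$ with index tuples $\vec j,\vec k$, the pure independence atom $\vec x\perp\vec y$ has value $[\![\phi^{(),\vec j,\vec k}_{\rm indep}]\!]_{\pi_{\mathbb{X}}}$, where $$\phi^{(),\vec j,\vec k}_{\rm indep}=\forall\vec v\vec w\big((\theta_{\vec j}(\vec v)\wedge\theta_{\vec k}(\vec w))=(\theta_{()}\wedge\theta_{\vec j,\vec k}(\vec v,\vec w))\big)$$ and $\theta_{\vec i_1,\dots,\vec i_n}(\vec u_1,\dots,\vec u_n)=\exists\vec x'(R(\vec x')\wedge\vec x'_{\vec i_1}=\vec u_1\wedge\dots\wedge\vec x'_{\vec i_n}=\vec u_n)$. Conjunction is interpreted as product, $\exists$ as sum over $A$, $\forall$ as product over $A$, equality literals as $1/0$, and a formula equality as $1$ if both sides have equal value in $K$, and $0$ otherwise. Unfolded, $\mathbb{X}$ satisfies $\vec x\perp\vec y$ (value $\neq0$) iff for all tuples $\vec a,\vec b$ over $A$: $$\Big(\sum_{s:\,s(\vec x)=\vec a}\mathbb{X}(s)\Big)\cdot\Big(\sum_{s:\,s(\vec y)=\vec b}\mathbb{X}(s)\Big)=\Big(\sum_s\mathbb{X}(s)\Big)\cdot\Big(\sum_{s:\,s(\vec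 x)=\vec a,\,s(\vec y)=\vec b}\mathbb{X}(s)\Big)$$ in $K$. Here $xy\perp z$ has $\vec x=(x,y)$, $\vec y=(z)$, and $x\perp yz$ has $\vec x=(x)$, $\vec y=(y,z)$. *)

(* Defs.v *)
From HB Require Import structures.
From mathcomp Require Import all_boot all_algebra.
Set Implicit Arguments. Unset Strict Implicit. Unset Printing Implicit Defensive.
Import GRing.Theory.
Local Open Scope ring_scope.

Definition assignment (V A : finType) := {ffun V -> A}.
Definition team (K : comPzSemiRingType) (V A : finType) := assignment V A -> K.

Section Indep.
Variables (K : comPzSemiRingType) (V A : finType) (X : team K V A).

Definition eqlit (a b : A) : K := if a == b then 1 else 0.

(* theta_{()} = exists x' R(x') *)
Definition theta0 : K := \sum_(s : assignment V A) X s.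

(* theta_{j}(v) = exists x' (R(x') /\ x'_j = v); facts R(a_s) correspond to
   assignments s, so the sum over A^k weighted by R is a sum over assignments *)
Definition theta1 (n : nat) (xs : 'I_n -> V) (v : {ffun 'I_n -> A}) : K :=
  \sum_(s : assignment V A) (X s * \prod_(i < n) eqlit (s (xs i)) (v i)).

Definition theta2 (n m : nat) (xs : 'I_n -> V) (ys : 'I_m -> V)
    (v : {ffun 'I_n -> A}) (w : {ffun 'I_m -> A}) : K :=
  \sum_(s : assignment V A)
     (X s * (\prod_(i < n) eqlit (s (xs i)) (v i))
          * (\prod_(i < m) eqlit (s (ys i)) (w i))).

(* value of phi_indep: forall v w ((theta_j(v) /\ theta_k(w)) = (theta_() /\ theta_{j,k}(v,w))) *)
Definition indep_value (n m : nat) (xs : 'I_n -> V) (ys : 'I_m -> V) : K :=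
  \prod_(v : {ffun 'I_n -> A}) \prod_(w : {ffun 'I_m -> A})
     (if theta1 xs v * theta1 ys w == theta0 * theta2 xs ys v w then 1 else 0).

Definition satisfies_indep (n m : nat) (xs : 'I_n -> V) (ys : 'I_m -> V) : Prop :=
  indep_value xs ys != 0.
End Indep.

Definition Var := 'I_3.
Definition vx : Var := inord 0.
Definition vy : Var := inord 1.
Definition vz : Var := inord 2.
Definition Dom := 'I_10.
Definition a_ (i : nat) : Dom := inord i.
Definition b_ (i : nat) : Dom := inord (4 + i).
Definition c_ (i : nat) : Dom := inord (8 + i).

Definition tup1 (u : Var) : 'I_1 -> Var := fun _ => u.
Definition tup2 (u w : Var) : 'I_2 -> Var := fun i => if val i == 0%N then u else w.

Definition support : seq (Dom * Dom * Dom) :=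
  [:: (a_ 0, b_ 0, c_ 0); (a_ 0, b_ 1, c_ 0); (a_ 1, b_ 0, c_ 1); (a_ 1, b_ 1, c_ 1);
      (a_ 2, b_ 2, c_ 0); (a_ 2, b_ 3, c_ 0); (a_ 3, b_ 2, c_ 1); (a_ 3, b_ 3, c_ 1)].

Definition Xteam : team 'Z_4 Var Dom :=
  fun s => if (s vx, s vy, s vz) \in support then 1 else 0.

(* Main.v *)
Require Import Defs.
From mathcomp Require Import all_boot all_algebra.
Import GRing.Theory.
Local Open Scope ring_scope.

Definition mk (t : Dom * Dom * Dom) : assignment Var Dom :=
  [ffun i : 'I_3 => if val i == 0%N then t.1.1 else if val i == 1%N then t.1.2 else t.2].
Definition gt (s : assignment Var Dom) : Dom * Dom * Dom := (s vx, s vy, s vz).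

Lemma gtK : cancel mk gt.
Proof. case=> [[a b] c]; by rewrite /gt /mk /vx /vy /vz !ffunE /= !inordK. Qed.
Lemma mkK : cancel gt mk.
Proof.
move=> s; apply/ffunP=> i; rewrite /gt /mk ffunE.
case: i => [[|[|[|n]]] Hi] //=; congr (s _); apply/val_inj; by rewrite /= inordK.
Qed.

Lemma inordE (m : nat) (H : (m < 10)%N) : @inord 9 m = Ordinal H.
Proof. by apply: val_inj; rewrite /= inordK. Qed.

Lemma mkx t : mk t vx = t.1.1. Proof. by rewrite /mk ffunE /vx /= inordK. Qed.
Lemma mky t : mk t vy = t.1.2. Proof. by rewrite /mk ffunE /vy /= inordK. Qed.
Lemma mkz t : mk t vz = t.2. Proof. by rewrite /mk ffunE /vz /= inordK. Qed.

Lemma sum_X (f : assignment Var Dom -> 'Z_4) :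
  \sum_s Xteam s * f s = \sum_(t <- Defs.support) f (mk t).
Proof.
rewrite (reindex mk); last by exists gt => x _; [apply: gtK | apply: mkK].
have E t : Xteam (mk t) = if t \in Defs.support then 1 else 0.
  by rewrite /Xteam -[(mk t vx, _, _)]/(gt (mk t)) gtK.
have U : uniq Defs.support.
  rewrite /Defs.support /a_ /b_ /c_ /=.
  by rewrite !inordE.
rewrite (big_uniq _ U) [X in _ = X]big_mkcond /=; apply: eq_bigr => t _.
by rewrite E; case: ifP => _; rewrite ?mul1r ?mul0r.
Qed.

Lemma th0 : theta0 Xteam = 0.
Proof. rewrite /theta0 -(eq_bigr _ (fun s _ => mulr1 (Xteam s))) sum_X.
by rewrite big_const_seq /=; apply/eqP. Qed.

Lemma L1 u (v : {ffun 'I_1 -> Dom}) :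
  theta1 Xteam (tup1 u) v = \sum_(t <- Defs.support) eqlit ('Z_4 : comPzSemiRingType) (mk t u) (v ord0).
Proof.
rewrite /theta1 (sum_X (fun s => \prod_(i < 1) eqlit ('Z_4 : comPzSemiRingType) (s (tup1 u i)) (v i))).
by apply: eq_bigr => t _; rewrite big_ord1.
Qed.

Lemma L2 u w (v : {ffun 'I_2 -> Dom}) :
  theta1 Xteam (tup2 u w) v = \sum_(t <- Defs.support)
     eqlit ('Z_4 : comPzSemiRingType) (mk t u) (v ord0) * eqlit ('Z_4 : comPzSemiRingType) (mk t w) (v (lift ord0 ord0)).
Proof.
rewrite /theta1 (sum_X (fun s => \prod_(i < 2) eqlit ('Z_4 : comPzSemiRingType) (s (tup2 u w i)) (v i))).
by apply: eq_bigr => t _; rewrite !big_ord_recl big_ord0 mulr1.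
Qed.


Lemma Ax (p : Dom) : \sum_(t <- Defs.support) eqlit ('Z_4 : comPzSemiRingType) (mk t vx) p = 0 \/
   \sum_(t <- Defs.support) eqlit ('Z_4 : comPzSemiRingType) (mk t vx) p = 2.
Proof.
rewrite /Defs.support !big_cons !big_nil !mkx /a_ /b_ /c_ /= !inordE //.
case: p => [[|[|[|[|[|[|[|[|[|[|m]]]]]]]]]] Hp]; rewrite /eqlit; try by [left; apply/eqP | right; apply/eqP]. Qed.

Lemma Ay (p : Dom) : \sum_(t <- Defs.support) eqlit ('Z_4 : comPzSemiRingType) (mk t vy) p = 0 \/
   \sum_(t <- Defs.support) eqlit ('Z_4 : comPzSemiRingType) (mk t vy) p = 2.
Proof.
rewrite /Defs.support !big_cons !big_nil !mky /a_ /b_ /c_ /= !inordE //.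
case: p => [[|[|[|[|[|[|[|[|[|[|m]]]]]]]]]] Hp]; rewrite /eqlit; try by [left; apply/eqP | right; apply/eqP]. Qed.

Lemma Az (p : Dom) : \sum_(t <- Defs.support) eqlit ('Z_4 : comPzSemiRingType) (mk t vz) p = 0.
Proof.
rewrite /Defs.support !big_cons !big_nil !mkz /a_ /b_ /c_ /= !inordE //.
case: p => [[|[|[|[|[|[|[|[|[|[|m]]]]]]]]]] Hp]; rewrite /eqlit; by apply/eqP.
Qed.

Lemma P1 : satisfies_indep Xteam (tup1 vx) (tup1 vy).
Proof.
rewrite /satisfies_indep /indep_value th0.
rewrite big1 ?oner_neq0 // => v _; rewrite big1 // => w _.
rewrite mul0r !L1.
case: (Ax (v ord0)) => ->; rewrite ?mul0r ?eqxx //.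
by case: (Ay (w ord0)) => ->; rewrite ?mulr0 ?eqxx.
Qed.

Lemma P2 : satisfies_indep Xteam (tup2 vx vy) (tup1 vz).
Proof.
rewrite /satisfies_indep /indep_value th0.
rewrite big1 ?oner_neq0 // => v _; rewrite big1 // => w _.
by rewrite mul0r L1 Az mulr0 eqxx.
Qed.

Lemma P3 : ~ satisfies_indep Xteam (tup1 vx) (tup2 vy vz).
Proof.
rewrite /satisfies_indep; apply/negP; rewrite negbK /indep_value.
pose v0 : {ffun 'I_1 -> Dom} := [ffun => a_ 0].
pose w0 : {ffun 'I_2 -> Dom} := [ffun i => if val i == 0%N then b_ 0 else c_ 0].
have F : (if theta1 Xteam (tup1 vx) v0 * theta1 Xteam (tup2 vy vz) w0 ==
    theta0 Xteam * theta2 Xteam (tup1 vx) (tup2 vy vz) v0 w0 then 1 else 0) = 0 :> 'Z_4.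
  rewrite th0 mul0r L1 L2 /v0 /w0 !ffunE /=.
  rewrite /Defs.support !big_cons !big_nil !mkx !mky !mkz /a_ /b_ /c_ /= !inordE //.
by rewrite (bigD1 v0) //= (bigD1 w0) //= F !mul0r.
Qed.

Theorem mainTheorem7 :
  [/\ satisfies_indep Xteam (tup1 vx) (tup1 vy),
      satisfies_indep Xteam (tup2 vx vy) (tup1 vz),
      ~ satisfies_indep Xteam (tup1 vx) (tup2 vy vz)
    & ~ (forall X : team 'Z_4 Var Dom,
           satisfies_indep X (tup1 vx) (tup1 vy) ->
           satisfies_indep X (tup2 vx vy) (tup1 vz) ->
           satisfies_indep X (tup1 vx) (tup2 vy vz))].
Proof.
split; [exact: P1 | exact: P2 | exact: P3 |].
by move=> H; apply: P3; apply: H; [exact: P1 | exact: P2].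
Qed.
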